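(* In the setting described in the context, with $\delta>0$, there exists an injection $\sigma\colon\mathrm{Rep}\,D(f_0)_O\hookrightarrow\mathrm{Rep}\,\mathcal{B}(\ker f^\delta)$ sending each element $((a,b),i)$ to an element of the form $([b,a+\delta),j)$, and such that every element $([c,d),l)$ of $\mathrm{Rep}\,\mathcal{B}(\ker f^\delta)$ not in the image of $\sigma$ has $c=0$ and $d=\delta$. There is an analogous injection $\sigma'\colon\mathrm{Rep}\,D(f'_0)_O\hookrightarrow\mathrm{Rep}\,\mathcal{B}(\ker f^{\delta\prime})$.
   Context: All vector spaces are over $\mathbb{Z}_2$. For a finite metric space $X$, $\mathrm{VR}_r(X)$ is the graph on $X$ with edges $[x,y]$ for $d^X(x,y)\le r$, and $\mathrm{PH}_0(X)$ is the persistence module $r\mapsto H_0(\mathrm{VR}_r(X))$ with structure maps $\rho_{rs}$ induced by inclusion; non-expansive maps induce persistence morphisms. Setting: $X\subseteq Z$, $X'\subseteq Z'$ finite metric spaces, $\varepsilon=d_{GH}((X,Z),(X',Z'))$. Fix a metric space $M$ and isometric embeddings $\gamma_Z,\gamma_{Z'}$ with $d^M_H(\gamma_Z(X),\gamma_{Z'}(X'))\le\varepsilon$, $d^M_H(\gamma_Z(Z),\gamma_{Z'}(Z'))\le\varepsilon$, and maps $\alpha^Z\colon Z\to Z'$, $\alpha^{Z'}\colon Z'\to Z$ with $\alpha^Z(X)\subseteq X'$, $\alpha^{Z'}(X')\subseteq X$, moving points by at most $\varepsilon$ in $M$; $\alpha^X,\alpha^{X'}$ are their restrictions. $Y=\{(x,x')\in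 X\times X':\alpha^X(x)=x'\text{ or }\alpha^{X'}(x')=x\}$; $Y^\delta$ ($Y^{\delta\prime}$) is $Y$ with distance $0$ between equal pairs and $\delta+d^X(x,y)$ (resp. $\delta+d^{X'}(x',y')$) between distinct pairs $(x,x'),(y,y')$. Projections $\pi\colon Y^\delta\to X$, $\pi'\colon Y^{\delta\prime}\to X'$ induce $h\colon\mathrm{PH}_0(Y^\delta)\to V=\mathrm{PH}_0(X)$, $h'\colon\mathrm{PH}_0(Y^{\delta\prime})\to V'=\mathrm{PH}_0(X')$; $f\colon V\to U=\mathrm{PH}_0(Z)$, $f'\colon V'\to U'=\mathrm{PH}_0(Z')$ are induced by inclusion, $f^\delta=f\circ h$, $f^{\delta\prime}=f'\circ h'$, and $f_0,f'_0$ are the degree-0 components of $f,f'$. With $\ker^+_b(U)=\ker\rho^U_{0b}$, $\ker^-_b(U)=\bigcup_{0\le r<b}\ker\rho^U_{0r}$, $\mathcal{M}^0_f(a,b)=\dim\frac{f_0(\ker^+_a V)\cap \ker^+_b U}{f_0(\ker^-_a V)\cap\ker^+_b U+f_0(\ker^+_a V)\cap \ker^-_b U}$; $D(f_0)_O$ is the multiset of pairs $(a,b)\in\mathbb{R}^2$ with multiplicity $\mathcal{M}^0_f(a,b)$ (positive multiplicities only), similarly $D(f'_0)_O$. $\mathrm{Rep}(S,m)=\{(s,\ell):1\le\ell\le m(s)\}$; $\mathcal{B}$ denotes the barcode (multiset of intervals of the interval decomposition). *)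

(* Defs.v *)
From HB Require Import structures.
From mathcomp Require Import all_boot all_order all_algebra.
From mathcomp Require Import boolp reals.
Set Implicit Arguments. Unset Strict Implicit. Unset Printing Implicit Defensive.
Import Order.TTheory GRing.Theory Num.Theory.
Local Open Scope ring_scope.

Definition is_metric (R : realType) (T : Type) (d : T -> T -> R) : Prop :=
  [/\ forall x y, 0 <= d x y,
      forall x y, d x y = 0 <-> x = y,
      forall x y, d x y = d y x &
      forall x y z, d x z <= d x y + d y z].

Definition isometric_embedding (R : realType) (T M : Type)
  (dT : T -> T -> R) (dM : M -> M -> R) (g : T -> M) : Prop :=
  forall x y, dM (g x) (g y) = dT x y.

(* d_H(g(A), g'(A')) <= e, for images of FINITE sets A, A' (so inf/sup are
   attained and this is the literal unfolding of the Hausdorff distance). *)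
Definition hausdorff_le (R : realType) (M : Type) (dM : M -> M -> R)
  (T T' : finType) (g : T -> M) (A : {set T}) (g' : T' -> M) (A' : {set T'})
  (e : R) : Prop :=
  [/\ 0 <= e,
      forall x, x \in A -> exists2 x', x' \in A' & dM (g x) (g' x') <= e &
      forall x', x' \in A' -> exists2 x, x \in A & dM (g x) (g' x') <= e].

(* Gromov--Hausdorff distance between pairs (X,Z), (X',Z'):
   eps = inf over metric spaces M and isometric embeddings of Z, Z' into M of
   max(d_H(gX,g'X'), d_H(gZ,g'Z')). *)
Definition dGH_pair_candidates (R : realType) (Z Z' : finType)
  (dZ : Z -> Z -> R) (X : {set Z}) (dZ' : Z' -> Z' -> R) (X' : {set Z'})
  (e : R) : Prop :=
  exists (M : Type) (dM : M -> M -> R) (g : Z -> M) (g' : Z' -> M),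
    [/\ is_metric dM, isometric_embedding dZ dM g, isometric_embedding dZ' dM g',
        hausdorff_le dM g X g' X' e & hausdorff_le dM g [set: Z] g' [set: Z'] e].

Definition is_dGH_pair (R : realType) (Z Z' : finType)
  (dZ : Z -> Z -> R) (X : {set Z}) (dZ' : Z' -> Z' -> R) (X' : {set Z'})
  (eps : R) : Prop :=
  (forall e, dGH_pair_candidates dZ X dZ' X' e -> eps <= e) /\
  (forall l, (forall e, dGH_pair_candidates dZ X dZ' X' e -> l <= e) -> l <= eps).

Definition Yset (Z Z' : finType) (X : {set Z}) (X' : {set Z'})
  (aZ : Z -> Z') (aZ' : Z' -> Z) : {set Z * Z'} :=
  [set p | [&& p.1 \in X, p.2 \in X' & (aZ p.1 == p.2) || (aZ' p.2 == p.1)]].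

Definition dYdelta (R : realType) (Z Z' : finType) (dZ : Z -> Z -> R) (delta : R)
  (p q : Z * Z') : R := if p == q then 0 else delta + dZ p.1 q.1.

Definition dYdelta' (R : realType) (Z Z' : finType) (dZ' : Z' -> Z' -> R) (delta : R)
  (p q : Z * Z') : R := if p == q then 0 else delta + dZ' p.2 q.2.

Notation F2 := 'F_2.

Definition vx (T : finType) (x : T) : 'rV[F2]_#|T| := delta_mx 0 (enum_rank x).

Definition Cspace (T : finType) (S : {set T}) : 'M[F2]_#|T| :=
  (\sum_(x in S) <<vx x>>)%MS.

(* image of the boundary map of VR_r(S): spanned by x + y for edges [x,y] *)
Definition Bspace (R : realType) (T : finType) (d : T -> T -> R) (S : {set T})
  (r : R) : 'M[F2]_#|T| :=
  (\sum_(x in S) \sum_(y in S | (d x y <= r)%R) <<vx x + vx y>>)%MS.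

(* A persistence module over [0,oo) given as a family of subquotients
   M_r = K r / B r of a fixed Z_2^n, structure maps induced by the identity. *)
Record subqmod (R : realType) (n : nat) := SubQMod {
  Kmod : R -> 'M[F2]_n ;
  Bmod : R -> 'M[F2]_n }.

(* PH_0(S, d) : r |-> H_0(VR_r(S)) = C_0(S) / im d_1 *)
Definition PH0 (R : realType) (T : finType) (d : T -> T -> R) (S : {set T}) :
  subqmod R #|T| := SubQMod (fun _ => Cspace S) (Bspace d S).

(* Kernel of the persistence morphism induced by the chain map  c |-> c *m P. *)
Definition kermod (R : realType) (n m : nat) (V : subqmod R n) (U : subqmod R m)
  (P : 'M[F2]_(n, m)) : subqmod R n :=
  SubQMod (fun r => (Kmod V r :&: kermx (P *m cokermx (Bmod U r)))%MS) (Bmod V).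

Definition chainmx (T T' : finType) (f : T -> T') : 'M[F2]_(#|T|, #|T'|) :=
  \matrix_(i, j) (f (enum_val i) == enum_val j)%:R.

(* Subspaces of the degree-0 spaces, represented by their preimages     *)
(* in the ambient Z_2^n (they all contain B 0).                          *)
(* ker^+_b(M) = ker rho_{0b} *)
Definition kerplus (R : realType) n (V : subqmod R n) (b : R) : 'M[F2]_n :=
  (Kmod V 0 :&: Bmod V b)%MS.

Definition span_pred n (P : 'rV[F2]_n -> Prop) : 'M[F2]_n :=
  (\sum_(v : 'rV[F2]_n | `[< P v >]) <<v>>)%MS.

(* ker^-_b(M) = union_{0 <= r < b} ker rho_{0r} (a subspace, being a nested union;
   we take its span, the empty union giving 0) *)
Definition kerminus (R : realType) n (V : subqmod R n) (b : R) : 'M[F2]_n :=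
  (Bmod V 0 + span_pred (fun v => exists r : R, (0 <= r)%R /\ (r < b)%R /\
                                       (v <= kerplus V r)%MS))%MS.

(* image under f_0 of a subspace W of V_0, f induced by the chain map P *)
Definition img0 (R : realType) n m (U : subqmod R m) (P : 'M[F2]_(n, m))
  (W : 'M[F2]_n) : 'M[F2]_m := (W *m P + Bmod U 0)%MS.

(* dim (A / C) for subspaces C <= A *)
Definition qdim n (A C : 'M[F2]_n) : nat := (\rank A - \rank C)%N.

Definition mult0 (R : realType) n m (V : subqmod R n) (U : subqmod R m)
  (P : 'M[F2]_(n, m)) (a b : R) : nat :=
  if (0 <= a) && (0 <= b) then
    qdim (img0 U P (kerplus V a) :&: kerplus U b)%MS
         ((img0 U P (kerminus V a) :&: kerplus U b) +
          (img0 U P (kerplus V a) :&: kerminus U b))%MS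
  else 0%N.

Definition itv_ok (R : realType) (I : interval R) : Prop :=
  (exists x, x \in I) /\ (forall x, x \in I -> 0 <= x).

(* (J, bar, g) is an interval decomposition of the subquotient module V:
   for each j, g j is a morphism from the interval module on bar j into V,
   and at each r >= 0 the classes of the g j r (r in bar j) form a basis
   of V_r; i.e. V is isomorphic to the direct sum of the interval modules. *)
Definition is_interval_decomposition (R : realType) n (V : subqmod R n)
  (J : finType) (bar : J -> interval R) (g : J -> R -> 'rV[F2]_n) : Prop :=
  [/\ forall j, itv_ok (bar j),
      forall j r, r \in bar j -> (g j r <= Kmod V r)%MS,
      forall j r s, r \in bar j -> s \in bar j -> r <= s ->
        (g j s - g j r <= Bmod V s)%MS,
      forall j r s, r \in bar j -> r <= s -> s \notin bar j ->
        (g j r <= Bmod V s)%MS &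
      forall r, 0 <= r ->
        (Kmod V r <= Bmod V r + \sum_(j | r \in bar j) <<g j r>>)%MS /\
      forall (lam : J -> F2),
        ((\sum_(j | r \in bar j) lam j *: g j r)%R <= Bmod V r)%MS ->
        forall j, r \in bar j -> lam j = 0].

Definition bar_mult (R : realType) (J : finType) (bar : J -> interval R)
  (I : interval R) : nat := #|[set j | bar j == I]|.

Definition RepBar (R : realType) (J : finType) (bar : J -> interval R) :=
  {q : interval R * nat | (0 < q.2 <= bar_mult bar q.1)%N}.
Definition RepD (R : realType) (m : R -> R -> nat) :=
  {p : (R * R) * nat | (0 < p.2 <= m p.1.1 p.1.2)%N}.

Definition injection_property (R : realType) (m : R -> R -> nat)
  (J : finType) (bar : J -> interval R) (delta : R) : Prop :=
  exists sigma : RepD m -> RepBar bar,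
    [/\ injective sigma,
        forall p : RepD m,
          (sval (sigma p)).1 = `[(sval p).1.2, (sval p).1.1 + delta[ &
        forall q : RepBar bar, (forall p, sigma p <> q) ->
          (sval q).1 = `[0, delta[ ].

(* Main.v *)
Require Import Defs.
From HB Require Import structures.
From mathcomp Require Import all_boot all_order all_algebra.
From mathcomp Require Import boolp reals.
From mathcomp Require Import ring lra zify.
Set Implicit Arguments. Unset Strict Implicit. Unset Printing Implicit Defensive.
Import Order.TTheory GRing.Theory Num.Theory.
Local Open Scope ring_scope.


Lemma addF2 (m n : nat) (v : 'M[F2]_(m,n)) : v + v = 0.
Proof. by rewrite -mulr2n -scaler_nat (_ : 2%:R = 0 :> F2) ?scale0r //; apply/eqP. Qed.

Lemma oppF2 (m n : nat) (v : 'M[F2]_(m,n)) : - v = v.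
Proof. by rewrite -[LHS]addr0 -(addF2 v) addrA addNr add0r. Qed.

Lemma mul_subE (m n p q : nat) (A : 'M[F2]_(m,n)) (Q : 'M[F2]_(n,p)) (M : 'M[F2]_(q,p)) :
  (A *m Q <= M)%MS = (A <= kermx (Q *m cokermx M))%MS.
Proof. by rewrite sub_kermx mulmxA -submxE. Qed.

Lemma sum_gen_subP n (I : finType) (P : pred I) (f : I -> 'rV[F2]_n) m (M : 'M[F2]_(m,n)) :
  (forall i, P i -> (f i <= M)%MS) -> (\sum_(i | P i) <<f i>> <= M)%MS.
Proof. by move=> H; apply/sumsmx_subP => i Pi; rewrite genmxE; exact: H. Qed.

Lemma sum_gen_sup n (I : finType) (P : pred I) (f : I -> 'rV[F2]_n) i :
  P i -> (f i <= \sum_(i | P i) <<f i>>)%MS.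
Proof. by move=> Pi; apply: (sumsmx_sup i) => //; rewrite genmxE. Qed.

Lemma le_rank_eq (m1 m2 n : nat) (A : 'M[F2]_(m1,n)) (B : 'M[F2]_(m2,n)) :
  (A <= B)%MS -> (B <= A)%MS -> \rank A = \rank B.
Proof. by move=> h1 h2; apply/eqmx_rank/andP. Qed.

Lemma vx_chain (T T' : finType) (f : T -> T') x : vx x *m chainmx f = vx (f x).
Proof.
rewrite /vx -rowE; apply/rowP => j; rewrite !mxE enum_rankK /=.
by rewrite eq_sym -(inj_eq enum_val_inj) enum_rankK.
Qed.

Lemma C_gen (T : finType) (S : {set T}) x : x \in S -> (vx x <= Cspace S)%MS.
Proof. by move=> xS; rewrite /Cspace; apply: (sumsmx_sup x) => //; rewrite genmxE. Qed.

Lemma C_subP (T : finType) (S : {set T}) m (M : 'M[F2]_(m, #|T|)) :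
  (forall x, x \in S -> (vx x <= M)%MS) -> (Cspace S <= M)%MS.
Proof. by move=> H; apply: sum_gen_subP. Qed.

Lemma B_gen (R : realType) (T : finType) (d : T -> T -> R) (S : {set T}) r x y :
  x \in S -> y \in S -> d x y <= r -> ((vx x + vx y)%R <= Bspace d S r)%MS.
Proof.
move=> xS yS dxy; rewrite /Bspace; apply: (sumsmx_sup x) => //=.
apply: (sumsmx_sup y); first by rewrite yS dxy.
by rewrite genmxE.
Qed.

Lemma B_subP (R : realType) (T : finType) (d : T -> T -> R) (S : {set T}) r m (M : 'M[F2]_(m, #|T|)) :
  (forall x y, x \in S -> y \in S -> d x y <= r -> ((vx x + vx y)%R <= M)%MS) ->
  (Bspace d S r <= M)%MS.
Proof.
move=> H; apply/sumsmx_subP => x xS; apply: sum_gen_subP => y /andP[yS dxy].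
exact: H.
Qed.

Lemma B_mono (R : realType) (T : finType) (d : T -> T -> R) (S : {set T}) r s :
  r <= s -> (Bspace d S r <= Bspace d S s)%MS.
Proof.
move=> rs; apply: B_subP => x y xS yS dxy; apply: B_gen => //; exact: le_trans rs.
Qed.

Lemma B_gap (R : realType) (T : finType) (d : T -> T -> R) (S : {set T}) r s :
  (forall x y, x \in S -> y \in S -> d x y <= s -> d x y <= r) ->
  (Bspace d S s <= Bspace d S r)%MS.
Proof. by move=> H; apply: B_subP => x y xS yS dxy; apply: B_gen => //; apply: H. Qed.

Lemma B_C (R : realType) (T : finType) (d : T -> T -> R) (S : {set T}) r :
  (Bspace d S r <= Cspace S)%MS.
Proof. by apply: B_subP => x y xS yS _; apply: addmx_sub; apply: C_gen. Qed.

Lemma B_zero (R : realType) (T : finType) (d : T -> T -> R) (S : {set T}) r :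
  (forall x y, x \in S -> y \in S -> d x y <= r -> x = y) ->
  (Bspace d S r <= (0 : 'M[F2]_#|T|))%MS.
Proof. by move=> H; apply: B_subP => x y xS yS dxy; rewrite (H x y) // addF2 sub0mx. Qed.

Lemma C_mono (T : finType) (S S' : {set T}) : S \subset S' -> (Cspace S <= Cspace S')%MS.
Proof. by move=> sS; apply: C_subP => x xS; apply: C_gen; apply: (subsetP sS). Qed.

Lemma B_monoS (R : realType) (T : finType) (d : T -> T -> R) (S S' : {set T}) r :
  S \subset S' -> (Bspace d S r <= Bspace d S' r)%MS.
Proof. by move=> sS; apply: B_subP => x y xS yS dxy; apply: B_gen => //; apply: (subsetP sS). Qed.


Lemma rank_add_gen n m (B : 'M[F2]_(m,n)) (v : 'rV[F2]_n) :
  ~~ (v <= B)%MS -> \rank (B + <<v>>)%MS = (\rank B + 1)%N.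
Proof.
move=> vB.
have vn0 : v != 0 by apply: contra vB => /eqP ->; exact: sub0mx.
have r1 : \rank <<v>> = 1%N by rewrite genmxE rank_rV vn0.
apply/eqP; rewrite -[X in (\rank B + X)%N]r1 (mxrank_adds_leqif B <<v>>%MS).2.
apply/row_subP => i; set w := row i _.
have wB : (w <= B)%MS by apply: submx_trans (row_sub i _) (capmxSl _ _).
have : (w <= v)%MS by rewrite -(genmxE v); apply: submx_trans (row_sub i _) (capmxSr _ _).
case/sub_rVP => mu wmu.
have [mu0|mu0] := eqVneq mu 0; first by rewrite wmu mu0 scale0r sub0mx.
case/negP: vB; have -> : v = mu^-1 *: w by rewrite wmu scalerA mulVf // scale1r.
exact: scalemx_sub.
Qed.

Lemma indep_rank n (J : eqType) (v : J -> 'rV[F2]_n) (s : seq J) : forall m (B : 'M[F2]_(m,n)),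
  uniq s ->
  (forall lam : J -> F2, ((\sum_(j <- s) lam j *: v j)%R <= B)%MS -> forall j, j \in s -> lam j = 0) ->
  \rank (B + \sum_(j <- s) <<v j>>)%MS = (\rank B + size s)%N.
Proof.
elim: s => [|j0 s IH] m B.
  by move=> _ _; rewrite big_nil addsmx0 addn0.
rewrite cons_uniq => /andP[j0s us] H.
rewrite big_cons addsmxA IH //=.
- rewrite rank_add_gen ?addn1 ?addnS //.
  apply/negP => vB.
  have := H (fun j => (j == j0)%:R); rewrite big_cons eqxx scale1r.
  rewrite big_seq_cond big1 ?addr0; last first.
    move=> j /andP[js _]; have /negPf -> : j != j0 by apply: contraNneq j0s => <-.
    by rewrite scale0r.
  by move/(_ vB j0); rewrite mem_head eqxx => /(_ isT) /eqP; rewrite oner_eq0.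
- move=> lam /sub_addsmxP[[u1 u2] /= E].
  have : (u2 *m <<v j0>> <= v j0)%MS by rewrite -(genmxE (v j0)); exact: submxMl.
  case/sub_rVP => mu Emu.
  pose lam' j := if j == j0 then - mu else lam j.
  have H' := H lam'.
  have Hsum : (\sum_(j <- j0 :: s) lam' j *: v j)%R = u1 *m B.
    rewrite big_cons /lam' eqxx.
    rewrite (eq_big_seq (fun j => lam j *: v j)); last first.
      by move=> j js; have /negPf -> : j != j0 by apply: contraNneq j0s => <-.
    by rewrite E Emu scaleNr addrC -addrA addrN addr0.
  move=> j js; have := H' _ j; rewrite Hsum submxMl /lam'.
  have /negPf -> : j != j0 by apply: contraNneq j0s => <-.
  by move/(_ isT); apply; rewrite inE js orbT.
Qed.

Lemma F2_swap n (a b : 'rV[F2]_n) : b = a + (a - b).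
Proof. by rewrite addrA addF2 add0r oppF2. Qed.

Lemma count_rank (R : realType) N (V : subqmod R N) (J : finType) (bar : J -> interval R) g
  (hB : forall s t, s <= t -> (Bmod V s <= Bmod V t)%MS)
  (hd : is_interval_decomposition V bar g) s t : 0 <= s -> s <= t ->
  \rank (Kmod V s + Bmod V t)%MS =
  (\rank (Bmod V t) + #|[set j | (s \in bar j) && (t \in bar j)]|)%N.
Proof.
move=> s0 st; have t0 : 0 <= t by apply: le_trans st.
case: hd => _ hK hmor hdie hbas.
set S := [set j | _].
have gtS : forall j, j \in S -> (g j t <= \sum_(j in S) <<g j t>>)%MS.
  by move=> j jS; apply: (sumsmx_sup j) => //; rewrite genmxE.
have -> : \rank (Kmod V s + Bmod V t)%MS = \rank (Bmod V t + \sum_(j in S) <<g j t>>)%MS.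
  apply: le_rank_eq; rewrite addsmx_sub.
  - apply/andP; split; last exact: addsmxSl.
    apply: submx_trans (hbas s s0).1 _; rewrite addsmx_sub; apply/andP; split.
      by apply: submx_trans (hB _ _ st) _; exact: addsmxSl.
    apply/sumsmx_subP => j sj; rewrite genmxE.
    case tj: (t \in bar j).
      have jS : j \in S by rewrite inE sj tj.
      rewrite (F2_swap (g j t) (g j s)); apply: addmx_sub.
        by apply: submx_trans (gtS j jS) _; exact: addsmxSr.
      by apply: submx_trans (hmor j s t sj tj st) _; exact: addsmxSl.
    by apply: submx_trans (hdie j s t sj st (negbT tj)) _; exact: addsmxSl.
  - apply/andP; split; first exact: addsmxSr.
    apply/sumsmx_subP => j; rewrite inE => /andP[sj tj]; rewrite genmxE.
    rewrite (F2_swap (g j s) (g j t)); apply: addmx_sub.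
      by apply: submx_trans (hK j s sj) _; exact: addsmxSl.
    by rewrite -opprB oppF2; apply: submx_trans (hmor j s t sj tj st) _; exact: addsmxSr.
rewrite -big_enum indep_rank ?enum_uniq -?cardE //.
move=> lam Hl j; rewrite mem_enum => jS.
have := (hbas t t0).2 (fun j => if j \in S then lam j else 0).
move=> /(_ _ j); rewrite jS; apply; last by move: jS; rewrite inE => /andP[].
rewrite big_mkcond /=; move: Hl; rewrite big_enum big_mkcond /=.
congr (_ <= _)%MS; apply: eq_bigr => i _.
case iS: (i \in S); last by case: (t \in bar i); rewrite ?scale0r.
by move: iS; rewrite inE => /andP[_ ->].
Qed.


Lemma itv_shape (R : realType) (I : interval R) :
  itv_ok I ->
  (forall c, 0 <= c -> exists2 t, c < t &
      forall u, c <= u -> u <= t -> (u \in I) = (c \in I)) ->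
  (exists u0, forall u, u0 <= u -> u \notin I) ->
  exists c d, [/\ 0 <= c, c < d & I = `[c, d[].
Proof.
case=> [[x xI] pos] loc [u0 van].
move: xI pos loc van.
case: I => [[[] c|[]] [[] d|[]]] xI pos loc van; rewrite ?in_itv /= ?andbT ?andbF in xI.
- case/andP: xI => cx xd; exists c, d; split => //; last lra.
  by apply: pos; rewrite in_itv /= lexx /=; lra.
- case/andP: xI => cx xd.
  have d0 : 0 <= d by apply: pos; rewrite in_itv /=; apply/andP; split; lra.
  have [t dt /(_ t)] := loc d d0; rewrite !in_itv /= !lexx (ltW dt) andbT.
  have -> : (t <= d) = false by apply/negbTE; rewrite -ltNge.
  by rewrite andbF (_ : c <= d) //=; [move/(_ isT isT) | lra].
- by [].
- case: (lerP u0 x) => ux.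
    by have := van x ux; rewrite in_itv /= andbT xI.
  by have := van u0 (lexx u0); rewrite in_itv /= andbT (le_trans xI (ltW ux)).
- case/andP: xI => cx xd.
  have x0 : 0 <= x by apply: pos; rewrite in_itv /=; apply/andP; split; lra.
  have c0 : 0 <= c.
    rewrite leNgt; apply/negP => c0.
    have : 0 <= c / 2 by apply: pos; rewrite in_itv /=; apply/andP; split; lra.
    lra.
  have [t ct ht] := loc c c0.
  case: (lerP t x) => tx.
    have := ht t (ltW ct) (lexx t); rewrite !in_itv /= ltxx /=.
    by rewrite ct /= (_ : t < d) //; lra.
  have := ht x (ltW cx) (ltW tx); rewrite !in_itv /= ltxx /=.
  by rewrite cx xd.
- case/andP: xI => cx xd.
  have x0 : 0 <= x by apply: pos; rewrite in_itv /=; apply/andP; split; lra.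
  have c0 : 0 <= c.
    rewrite leNgt; apply/negP => c0.
    have : 0 <= c / 2 by apply: pos; rewrite in_itv /=; apply/andP; split; lra.
    lra.
  have [t ct ht] := loc c c0.
  case: (lerP t x) => tx.
    have := ht t (ltW ct) (lexx t); rewrite !in_itv /= ltxx /=.
    by rewrite ct /= (_ : t <= d) //; lra.
  have := ht x (ltW cx) (ltW tx); rewrite !in_itv /= ltxx /=.
  by rewrite cx xd.
- by [].
- have x0 : 0 <= x by apply: pos; rewrite in_itv /= andbT.
  have c0 : 0 <= c.
    rewrite leNgt; apply/negP => c0.
    have : 0 <= c / 2 by apply: pos; rewrite in_itv /= andbT; lra.
    lra.
  have [t ct ht] := loc c c0.
  case: (lerP t x) => tx.
    have := ht t (ltW ct) (lexx t); rewrite !in_itv /= ltxx /= andbT.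
    by rewrite ct.
  have := ht x (ltW xI) (ltW tx); rewrite !in_itv /= ltxx /= andbT.
  by rewrite xI.
- have x0 : 0 <= x by apply: pos; rewrite in_itv.
  have : 0 <= -1 :> R by apply: pos; rewrite in_itv /=; lra.
  lra.
- have x0 : 0 <= x by apply: pos; rewrite in_itv.
  have : 0 <= -1 :> R by apply: pos; rewrite in_itv /=; lra.
  lra.
- by [].
- have : 0 <= -1 :> R by apply: pos; rewrite in_itv.
  lra.
- by [].
- by [].
- by [].
- by [].
Qed.

Lemma gapR (R : realType) (s : seq R) r :
  exists2 t, r < t & forall z, z \in s -> z <= t -> z <= r.
Proof.
elim: s => [|z s [t rt IH]]; first by exists (r + 1) => //; lra.
case: (lerP z r) => zr.
  by exists t => // z'; rewrite inE => /orP[/eqP -> //| ]; apply: IH.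
case: (lerP z t) => zt.
  exists ((r + z) / 2); first lra.
  move=> z'; rewrite inE => /orP[/eqP -> | z's h]; first lra.
  by apply: IH => //; lra.
by exists t => // z'; rewrite inE => /orP[/eqP -> h| ]; [lra | apply: IH].
Qed.

Lemma gapL (R : realType) (s : seq R) lo r : lo < r ->
  exists t, [/\ lo <= t, t < r & forall z, z \in s -> z < r -> z <= t].
Proof.
move=> lor; elim: s => [|z s [t [lot tr IH]]]; first by exists lo; split.
case: (ltrP z r) => zr; last first.
  exists t; split => // z'; rewrite inE => /orP[/eqP -> h|]; [lra | exact: IH].
case: (lerP z t) => zt.
  exists t; split => // z'; rewrite inE => /orP[/eqP -> //|]; exact: IH.
exists z; split => //; try lra.
move=> z'; rewrite inE => /orP[/eqP -> //| z's h]; have := IH z' z's h; lra.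
Qed.


Ltac rlra := repeat match goal with
  | H : context [mxrank _] |- _ => clear H
  | H : context [card _] |- _ => clear H
  | H : context [leq _ _] |- _ => clear H
  | H : context [mult0 _ _ _] |- _ => clear H
  end; lra.

Section Core.
Variables (R : realType) (T W : finType) (pi : T -> W) (dW : W -> W -> R).
Variable (hW : is_metric dW).
Variables (X : {set W}) (Y : {set T}).
Variable (hYX : forall y, y \in Y -> pi y \in X).
Variable (hsec : forall x, x \in X -> exists2 y, y \in Y & pi y = x).
Variables (delta : R) (hdelta : 0 < delta) (dT : T -> T -> R).
Variable (hdT : forall p q, dT p q = if p == q then 0 else delta + dW (pi p) (pi q)).

Local Notation P0 := (chainmx pi).

Definition spick x := [pick y in Y | pi y == x].
Definition Smx : 'M[F2]_(#|W|, #|T|) :=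
  \matrix_(i, j) (spick (enum_val i) == Some (enum_val j))%:R.

Lemma vx_S x : vx x *m Smx = if spick x is Some y then vx y else 0.
Proof.
rewrite /vx -rowE; apply/rowP => j; rewrite !mxE enum_rankK.
case: (spick x) => [y|]; rewrite !mxE //=.
by rewrite eq_sym -(inj_eq enum_val_inj) enum_rankK.
Qed.

Lemma spickX x : x \in X -> exists2 y, spick x = Some y & (y \in Y) && (pi y == x).
Proof.
move=> xX; rewrite /spick; case: pickP => [y Hy|H]; first by exists y.
by have [y yY pyx] := hsec xX; have := H y; rewrite yY pyx eqxx.
Qed.

Lemma vx_SP x : x \in X -> vx x *m Smx *m P0 = vx x.
Proof.
by case/spickX => y e /andP[_ /eqP pyx]; rewrite vx_S e vx_chain pyx.
Qed.

Lemma vx_SC x : x \in X -> (vx x *m Smx <= Cspace Y)%MS.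
Proof. by case/spickX => y e /andP[yY _]; rewrite vx_S e; apply: C_gen. Qed.

Lemma CX_lift m (A : 'M[F2]_(m, #|W|)) : (A <= Cspace X)%MS -> A *m Smx *m P0 = A.
Proof.
move=> AX.
have : (A <= kermx (Smx *m P0 - 1%:M))%MS.
  apply: submx_trans AX _; apply: C_subP => x xX.
  by rewrite sub_kermx mulmxBr mulmxA vx_SP // mulmx1 subrr.
move/sub_kermxP; rewrite mulmxBr mulmx1 mulmxA; exact: subr0_eq.
Qed.

Lemma CX_S m (A : 'M[F2]_(m, #|W|)) : (A <= Cspace X)%MS -> (A *m Smx <= Cspace Y)%MS.
Proof.
move=> AX; rewrite mul_subE; apply: submx_trans AX _; apply: C_subP => x xX.
by rewrite -mul_subE; apply: vx_SC.
Qed.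

Lemma CY_P m (A : 'M[F2]_(m, #|T|)) : (A <= Cspace Y)%MS -> (A *m P0 <= Cspace X)%MS.
Proof.
move=> AY; rewrite mul_subE; apply: submx_trans AY _; apply: C_subP => y yY.
by rewrite -mul_subE vx_chain; apply: C_gen; apply: hYX.
Qed.


Lemma dWxx x : dW x x = 0.
Proof. by case: hW => _ h _ _; apply/h. Qed.

Lemma dW_ge0 x y : 0 <= dW x y.
Proof. by case: hW. Qed.

Lemma dW_eq0 x y : dW x y = 0 -> x = y.
Proof. by case: hW => _ h _ _; move/h. Qed.

Lemma BY_P m t (A : 'M[F2]_(m, #|T|)) :
  (A <= Bspace dT Y t)%MS -> (A *m P0 <= Bspace dW X (t - delta))%MS.
Proof.
move=> AB; rewrite mul_subE; apply: submx_trans AB _; apply: B_subP => p q pY qY.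
rewrite -mul_subE mulmxDl !vx_chain hdT; case: eqP => [->|pq] dpq.
  by rewrite addF2 sub0mx.
by apply: B_gen; try apply: hYX => //; lra.
Qed.

Lemma BX_lift m u (A : 'M[F2]_(m, #|W|)) :
  (A <= Bspace dW X u)%MS -> (A *m Smx <= Bspace dT Y (u + delta))%MS.
Proof.
move=> AB; rewrite mul_subE; apply: submx_trans AB _; apply: B_subP => x y xX yX dxy.
rewrite -mul_subE mulmxDl.
have [x' ex /andP[x'Y /eqP px']] := spickX xX.
have [y' ey /andP[y'Y /eqP py']] := spickX yX.
rewrite !vx_S ex ey; have [<-|xy] := eqVneq x' y'; first by rewrite addF2 sub0mx.
by apply: B_gen => //; rewrite hdT (negPf xy) px' py'; lra.
Qed.

Lemma ker_B m t (A : 'M[F2]_(m, #|T|)) :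
  (A <= Cspace Y)%MS -> A *m P0 = 0 -> delta <= t -> (A <= Bspace dT Y t)%MS.
Proof.
move=> AY AP dt.
have -> : A = A *m (1%:M - P0 *m Smx) by rewrite mulmxBr mulmx1 mulmxA AP mul0mx subr0.
rewrite mul_subE; apply: submx_trans AY _; apply: C_subP => y yY.
rewrite -mul_subE mulmxBr mulmx1 mulmxA vx_chain.
have [y' e /andP[y'Y /eqP py']] := spickX (hYX yY).
rewrite vx_S e oppF2; have [<-|yy] := eqVneq y y'; first by rewrite addF2 sub0mx.
by apply: B_gen => //; rewrite hdT (negPf yy) py' dWxx addr0.
Qed.

Lemma B_small t : t < delta -> (Bspace dT Y t <= (0 : 'M[F2]_#|T|))%MS.
Proof.
move=> tl; apply: B_zero => p q _ _; rewrite hdT; case: eqP => // _ h.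
exfalso; have := dW_ge0 (pi p) (pi q); lra.
Qed.

Lemma B_le0 (S : {set W}) u : u <= 0 -> (Bspace dW S u <= (0 : 'M[F2]_#|W|))%MS.
Proof.
move=> u0; apply: B_zero => x y _ _ h; apply: dW_eq0.
have := dW_ge0 x y; lra.
Qed.

Definition Kf := kermod (PH0 dT Y) (PH0 dW [set: W]) (P0 *m 1%:M).

Lemma subK m s (A : 'M[F2]_(m, #|T|)) :
  (A <= Kmod Kf s)%MS = (A <= Cspace Y)%MS && (A *m P0 <= Bspace dW [set: W] s)%MS.
Proof. by rewrite /= sub_capmx mulmx1 -mul_subE. Qed.

Definition Bb s := (Cspace X :&: Bspace dW [set: W] s)%MS.
Definition kerY := (Cspace Y :&: kermx P0)%MS.

Lemma KP1 s : (Kmod Kf s *m P0 <= Bb s)%MS.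
Proof.
rewrite sub_capmx; apply/andP; split.
  by apply: CY_P; rewrite /= capmxSl.
by have := submx_refl (Kmod Kf s); rewrite subK => /andP[].
Qed.

Lemma KP2 s : (Bb s <= Kmod Kf s *m P0)%MS.
Proof.
rewrite /Bb -{1}(CX_lift (capmxSl _ (Bspace dW [set: W] s))); apply: submxMr.
rewrite subK CX_S ?capmxSl //= CX_lift ?capmxSl //; exact: capmxSr.
Qed.

Lemma kerY_K s : (kerY <= Kmod Kf s)%MS.
Proof.
rewrite subK capmxSl /=.
by have /sub_kermxP -> := capmxSr (Cspace Y) (kermx P0); rewrite sub0mx.
Qed.

Lemma kerY_B t : delta <= t -> (kerY <= Bspace dT Y t)%MS.
Proof.
move=> dt; apply: ker_B => //; first exact: capmxSl.
by apply/sub_kermxP; exact: capmxSr.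
Qed.

Lemma N_big s t : delta <= t ->
  (\rank (Kmod Kf s + Bmod Kf t)%MS + \rank (Bspace dW X (t - delta)))%N =
  (\rank (Bb s + Bspace dW X (t - delta))%MS + \rank (Bmod Kf t))%N.
Proof.
move=> dt /=.
rewrite -(mxrank_mul_ker (Kmod Kf s + Bspace dT Y t)%MS P0).
rewrite -(mxrank_mul_ker (Bspace dT Y t) P0).
have k1 : \rank ((Kmod Kf s + Bspace dT Y t)%MS :&: kermx P0)%MS = \rank kerY.
  apply: le_rank_eq; rewrite !sub_capmx ?capmxSr ?andbT.
    apply: submx_trans (capmxSl _ _) _; rewrite addsmx_sub B_C andbT.
    by rewrite /= capmxSl.
  by apply: submx_trans (kerY_B dt) _; exact: addsmxSr.
have k2 : \rank (Bspace dT Y t :&: kermx P0)%MS = \rank kerY.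
  apply: le_rank_eq; rewrite !sub_capmx ?capmxSr ?andbT.
    by apply: submx_trans (capmxSl _ _) _; rewrite B_C.
  exact: kerY_B.
have i1 : \rank ((Kmod Kf s + Bspace dT Y t)%MS *m P0) =
          \rank (Bb s + Bspace dW X (t - delta))%MS.
  rewrite addsmxMr; apply: le_rank_eq; apply: addsmxS.
  - exact: KP1.
  - exact: BY_P.
  - exact: KP2.
  rewrite -{1}(CX_lift (B_C _ _ _)); apply: submxMr.
  by have := BX_lift (submx_refl (Bspace dW X (t - delta))); rewrite subrK.
have i2 : \rank (Bspace dT Y t *m P0) = \rank (Bspace dW X (t - delta)).
  apply: le_rank_eq; first exact: BY_P.
  rewrite -{1}(CX_lift (B_C _ _ _)); apply: submxMr.
  by have := BX_lift (submx_refl (Bspace dW X (t - delta))); rewrite subrK.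
by rewrite k1 k2 i1 i2 -!addnA [(\rank kerY + _)%N]addnC.
Qed.

Lemma N_small s t : t < delta ->
  \rank (Kmod Kf s + Bmod Kf t)%MS = (\rank (Bb s) + \rank kerY)%N.
Proof.
move=> td /=.
have -> : \rank (Kmod Kf s + Bspace dT Y t)%MS = \rank (Kmod Kf s).
  apply: le_rank_eq; last exact: addsmxSl.
  by rewrite addsmx_sub submx_refl /=; apply: submx_trans (B_small td) (sub0mx _ _).
rewrite -(mxrank_mul_ker (Kmod Kf s) P0); congr (_ + _)%N.
  by apply: le_rank_eq; [exact: KP1 | exact: KP2].
apply: le_rank_eq.
  by rewrite sub_capmx capmxSr andbT; apply: submx_trans (capmxSl _ _) _; rewrite /= capmxSl.
by rewrite sub_capmx kerY_K capmxSr.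
Qed.

Lemma B_small0 t : t < delta -> \rank (Bmod Kf t) = 0%N.
Proof. by move=> td; have := mxrankS (B_small td); rewrite mxrank0 leqn0 => /eqP. Qed.


Definition ones : 'cV[F2]_#|W| := const_mx 1.

Lemma vx_ones x : vx x *m ones = 1%:M.
Proof. by rewrite /vx -rowE; apply/matrixP => i j; rewrite !mxE !ord1. Qed.

Lemma B_aug (S : {set W}) r : (Bspace dW S r <= kermx ones)%MS.
Proof. by apply: B_subP => x y _ _ _; rewrite sub_kermx mulmxDl !vx_ones addF2. Qed.

Lemma augX u : (forall x y, x \in X -> y \in X -> dW x y <= u) ->
  (Cspace X :&: kermx ones <= Bspace dW X u)%MS.
Proof.
move=> H; case: (set_0Vmem X) => [X0 | [x0 x0X]].
  apply: submx_trans (capmxSl _ _) _; apply: C_subP => x; by rewrite X0 inE.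
set A := (Cspace X :&: _)%MS.
have AO : A *m ones = 0 by apply/sub_kermxP; exact: capmxSr.
have -> : A = A *m (1%:M - ones *m vx x0) by rewrite mulmxBr mulmx1 mulmxA AO mul0mx subr0.
rewrite mul_subE; apply: submx_trans (capmxSl _ _) _; apply: C_subP => x xX.
rewrite -mul_subE mulmxBr mulmx1 mulmxA vx_ones mul1mx oppF2.
by apply: B_gen => //; apply: H.
Qed.

Lemma dW_bound : exists D, 0 <= D /\ forall x y, dW x y <= D.
Proof.
exists (\sum_(p : W * W) dW p.1 p.2); split.
  by apply: sumr_ge0 => p _; apply: dW_ge0.
move=> x y; rewrite (bigD1 (x, y)) //=.
have : 0 <= \sum_(i | i != (x, y)) dW i.1 i.2 by apply: sumr_ge0 => p _; apply: dW_ge0.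
lra.
Qed.

Lemma N_large : exists u0, forall u, u0 <= u ->
  \rank (Kmod Kf u + Bmod Kf u)%MS = \rank (Bmod Kf u).
Proof.
have [D [D0 HD]] := dW_bound.
exists (delta + D) => u uD.
have du : delta <= u by lra.
have := N_big u du.
have -> : \rank (Bb u + Bspace dW X (u - delta))%MS = \rank (Bspace dW X (u - delta)).
  apply: le_rank_eq; last exact: addsmxSr.
  rewrite addsmx_sub submx_refl andbT; apply: submx_trans (augX _).
    by apply: capmxS => //; exact: B_aug.
  by move=> x y _ _; have := HD x y; lra.
lia.
Qed.


Lemma km_le (S : {set W}) a a' : 0 <= a' -> a' < a ->
  (forall x y, x \in S -> y \in S -> dW x y < a -> dW x y <= a') ->
  (kerminus (PH0 dW S) a <= kerplus (PH0 dW S) a')%MS.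
Proof.
move=> a0 aa gap; rewrite /kerminus addsmx_sub; apply/andP; split.
  by rewrite /kerplus /= sub_capmx B_C; exact: B_mono.
rewrite /span_pred; apply: sum_gen_subP => v /asboolP [r [r0 [ra vK]]].
apply: submx_trans vK _; rewrite /kerplus /=; apply: capmxS => //.
by apply: B_gap => x y xS yS h; apply: gap => //; lra.
Qed.

Lemma km_ge (S : {set W}) a a' : 0 <= a' -> a' < a ->
  (kerplus (PH0 dW S) a' <= kerminus (PH0 dW S) a)%MS.
Proof.
move=> a0 aa; apply: submx_trans (addsmxSr _ _); apply/row_subP => i; rewrite /span_pred.
apply: (sumsmx_sup (row i (kerplus (PH0 dW S) a'))); last by rewrite genmxE.
by apply/asboolP; exists a'; split => //; split => //; exact: row_sub.
Qed.

Lemma km0 (S : {set W}) : (kerminus (PH0 dW S) 0 <= (0 : 'M[F2]_#|W|))%MS.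
Proof.
rewrite /kerminus addsmx_sub B_le0 //=.
by apply: sum_gen_subP => v /asboolP [r [r0 [r_lt _]]]; exfalso; lra.
Qed.

Lemma kp0 (S : {set W}) : (kerplus (PH0 dW S) 0 <= (0 : 'M[F2]_#|W|))%MS.
Proof. by apply: submx_trans (capmxSr _ _) _; apply: B_le0. Qed.

Lemma img0_le (A : 'M[F2]_#|W|) : (img0 (PH0 dW [set: W]) 1%:M A <= A)%MS.
Proof.
rewrite /img0 addsmx_sub mulmx1 submx_refl /=.
by apply: submx_trans (B_le0 _ (lexx 0)) (sub0mx _ _).
Qed.

Lemma img0_ge (A : 'M[F2]_#|W|) : (A <= img0 (PH0 dW [set: W]) 1%:M A)%MS.
Proof. by rewrite /img0 mulmx1 addsmxSl. Qed.

Lemma kpV_kpU a : (kerplus (PH0 dW X) a <= kerplus (PH0 dW [set: W]) a)%MS.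
Proof. by apply: capmxS; [apply: C_mono | apply: B_monoS]; apply: subsetT. Qed.

Lemma mult0_pos a b : (0 < mult0 (PH0 dW X) (PH0 dW [set: W]) 1%:M a b)%N ->
  [/\ 0 < a, 0 < b & b <= a].
Proof.
rewrite /mult0; case: ifP => // /andP[a0 b0].
rewrite /qdim subn_gt0 => h.
have ha : 0 < a.
  rewrite lt0r a0 andbT; apply/negP => /eqP a00; rewrite a00 in h.
  have : (\rank (img0 (PH0 dW [set: W]) 1%:M (kerplus (PH0 dW X) 0) :&:
             kerplus (PH0 dW [set: W]) b) <= \rank (0 : 'M[F2]_#|W|)%R)%N.
    apply: mxrankS; apply: submx_trans (capmxSl _ _) _; apply: submx_trans (img0_le _) _; exact: kp0.
  by rewrite mxrank0 leqn0 => /eqP e; rewrite e in h.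
have hb : 0 < b.
  rewrite lt0r b0 andbT; apply/negP => /eqP b00; rewrite b00 in h.
  have : (\rank (img0 (PH0 dW [set: W]) 1%:M (kerplus (PH0 dW X) a) :&:
             kerplus (PH0 dW [set: W]) 0) <= \rank (0 : 'M[F2]_#|W|)%R)%N.
    apply: mxrankS; apply: submx_trans (capmxSr _ _) _; exact: kp0.
  by rewrite mxrank0 leqn0 => /eqP e; rewrite e in h.
split => //; rewrite leNgt; apply/negP => ab; move: h.
rewrite ltnNge => /negP; apply; apply: mxrankS.
apply: submx_trans (addsmxSr _ _); rewrite sub_capmx capmxSl /=.
apply: submx_trans (capmxSl _ _) _.
apply: submx_trans (img0_le _) _; apply: submx_trans (kpV_kpU a) _.
exact: km_ge.
Qed.

Lemma mult0E a b a' b' : 0 <= a' -> a' < a -> 0 <= b' -> b' < b ->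
  (forall x y, x \in X -> y \in X -> dW x y < a -> dW x y <= a') ->
  (forall x y, dW x y < b -> dW x y <= b') ->
  (mult0 (PH0 dW X) (PH0 dW [set: W]) 1%:M a b
   + \rank (kerplus (PH0 dW X) a' :&: kerplus (PH0 dW [set: W]) b)
   + \rank (kerplus (PH0 dW X) a :&: kerplus (PH0 dW [set: W]) b')
  = \rank (kerplus (PH0 dW X) a :&: kerplus (PH0 dW [set: W]) b)
   + \rank (kerplus (PH0 dW X) a' :&: kerplus (PH0 dW [set: W]) b'))%N.
Proof.
move=> a'0 aa b'0 bb gX gZ.
have a0 : 0 <= a by lra.
have b0 : 0 <= b by lra.
rewrite /mult0 a0 b0 /qdim.
set KVa := kerplus (PH0 dW X) a; set KVa' := kerplus (PH0 dW X) a'.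
set KUb := kerplus (PH0 dW [set: W]) b; set KUb' := kerplus (PH0 dW [set: W]) b'.
have mV1 := km_le a'0 aa gX.
have mV2 := km_ge X a'0 aa.
have mU1 : (kerminus (PH0 dW [set: W]) b <= KUb')%MS by apply: km_le => // x y _ _; apply: gZ.
have mU2 := km_ge [set: W] b'0 bb.
have e1 : \rank (img0 (PH0 dW [set: W]) 1%:M KVa :&: KUb)%MS = \rank (KVa :&: KUb)%MS.
  by apply: le_rank_eq; apply: capmxS => //; [exact: img0_le | exact: img0_ge].
have e2 : \rank (img0 (PH0 dW [set: W]) 1%:M (kerminus (PH0 dW X) a) :&: KUb +
              img0 (PH0 dW [set: W]) 1%:M KVa :&: kerminus (PH0 dW [set: W]) b)%MS
          = \rank ((KVa' :&: KUb) + (KVa :&: KUb'))%MS.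
  apply: le_rank_eq; apply: addsmxS; apply: capmxS => //.
  - by apply: submx_trans (img0_le _) _.
  - exact: img0_le.
  - by apply: submx_trans mV2 (img0_ge _).
  - exact: img0_ge.
have e3 := mxrank_sum_cap (KVa' :&: KUb)%MS (KVa :&: KUb')%MS.
have e4 : \rank ((KVa' :&: KUb) :&: (KVa :&: KUb'))%MS = \rank (KVa' :&: KUb')%MS.
  apply: le_rank_eq.
    by apply: capmxS; [exact: capmxSl | exact: capmxSr].
  rewrite sub_capmx; apply/andP; split; rewrite sub_capmx; apply/andP; split.
  - exact: capmxSl.
  - apply: submx_trans (capmxSr _ _) _; apply: capmxS => //; exact: B_mono (ltW bb).
  - apply: submx_trans (capmxSl _ _) _; apply: capmxS => //; exact: B_mono (ltW aa).
  - exact: capmxSr.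
have e5 : (\rank ((KVa' :&: KUb) + (KVa :&: KUb'))%MS <= \rank (KVa :&: KUb)%MS)%N.
  apply: mxrankS; rewrite addsmx_sub; apply/andP; split; apply: capmxS => //.
    by apply: capmxS => //; exact: B_mono (ltW aa).
  by apply: capmxS => //; exact: B_mono (ltW bb).
rewrite e1 e2 /=; rewrite e4 in e3; by rewrite -addnA -e3 addnA subnK.
Qed.

Lemma Bb_link s u :
  \rank (Bb s :&: Bspace dW X u)%MS =
  \rank (kerplus (PH0 dW X) u :&: kerplus (PH0 dW [set: W]) s)%MS.
Proof.
apply: le_rank_eq; rewrite /Bb /kerplus /= !sub_capmx.
  rewrite -!andbA; apply/and4P; split.
  - by apply: submx_trans (capmxSl _ _) _; exact: capmxSl.
  - exact: capmxSr.
  - apply: submx_trans (capmxSl _ _) _; apply: submx_trans (capmxSr _ _) _; exact: B_C.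
  - by apply: submx_trans (capmxSl _ _) _; exact: capmxSr.
rewrite -!andbA; apply/and3P; split.
- by apply: submx_trans (capmxSl _ _) _; exact: capmxSl.
- by apply: submx_trans (capmxSr _ _) _; exact: capmxSr.
- by apply: submx_trans (capmxSl _ _) _; exact: capmxSr.
Qed.



Lemma Bb0r : \rank (Bb 0) = 0%N.
Proof.
have := mxrankS (submx_trans (capmxSr (Cspace X) _) (B_le0 [set: W] (lexx 0))).
by rewrite -/(Bb 0) mxrank0 leqn0 => /eqP.
Qed.

Lemma BX0r u : u <= 0 -> \rank (Bspace dW X u) = 0%N.
Proof. by move=> u0; have := mxrankS (B_le0 X u0); rewrite mxrank0 leqn0 => /eqP. Qed.

Lemma BbX0r s u : u <= 0 -> \rank (Bb s + Bspace dW X u)%MS = \rank (Bb s).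
Proof.
move=> u0; apply: le_rank_eq; last exact: addsmxSl.
rewrite addsmx_sub submx_refl /=.
exact: submx_trans (B_le0 X u0) (sub0mx _ _).
Qed.

Lemma S_small s t n : t < delta ->
  \rank (Kmod Kf s + Bmod Kf t)%MS = (\rank (Bmod Kf t) + n)%N ->
  n = (\rank (Bb s) + \rank kerY)%N.
Proof. by move=> td; rewrite N_small // B_small0 // add0n. Qed.

Lemma S_delta s n :
  \rank (Kmod Kf s + Bmod Kf delta)%MS = (\rank (Bmod Kf delta) + n)%N ->
  n = \rank (Bb s).
Proof.
move=> e; have := N_big s (lexx delta).
rewrite e BbX0r; last by rewrite subrr.
rewrite BX0r; last by rewrite subrr.
move: (\rank (Bb s)) (\rank (Bmod Kf delta)) => a b; lia.
Qed.

Lemma S_big s t n : delta <= t ->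
  \rank (Kmod Kf s + Bmod Kf t)%MS = (\rank (Bmod Kf t) + n)%N ->
  (n + \rank (kerplus (PH0 dW X) (t - delta) :&: kerplus (PH0 dW [set: W]) s)%MS
   = \rank (Bb s))%N.
Proof.
move=> dt e; have := N_big s dt; rewrite e.
have := mxrank_sum_cap (Bb s) (Bspace dW X (t - delta)).
rewrite Bb_link.
move: (\rank (Bb s + _)%MS) (\rank (Bb s)) (\rank (Bspace dW X (t - delta)))
      (\rank (kerplus _ _ :&: _)%MS) (\rank (Bmod Kf t)) => a b c d f.
lia.
Qed.

Lemma F0 u : \rank (kerplus (PH0 dW X) u :&: kerplus (PH0 dW [set: W]) 0)%MS = 0%N.
Proof.
have := mxrankS (submx_trans (capmxSr (kerplus (PH0 dW X) u) _) (kp0 [set: W])).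
by rewrite mxrank0 leqn0 => /eqP.
Qed.

Lemma ar1 (p q BC : nat) : (BC + q = q + p -> p - BC = 0)%N.
Proof. lia. Qed.
Lemma ar2 (p q k BC : nat) : (BC + q = (q + k) + p -> (p + k) - BC = 0)%N.
Proof. lia. Qed.
Lemma ar3 (S1 S2 S3 S4 F1 F2 F3 F4 Bc Bc' BC m : nat) :
  (S1 + F1 = Bc -> S2 + F2 = Bc' -> S3 + F3 = Bc -> S4 + F4 = Bc' ->
   BC + S4 = S2 + S3 -> BC <= S1 -> m + F1 + F4 = F3 + F2 -> S1 - BC = m)%N.
Proof. lia. Qed.

Theorem core_main (J : finType) (bar : J -> interval R) g :
  is_interval_decomposition Kf bar g ->
  injection_property (mult0 (PH0 dW X) (PH0 dW [set: W]) 1%:M) bar delta.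
Proof.
move=> hd.
have hB : forall s t, s <= t -> (Bmod Kf s <= Bmod Kf t)%MS by move=> s t st; exact: B_mono.
pose Sst s t := [set j | (s \in bar j) && (t \in bar j)].
have cnt s t : 0 <= s -> s <= t ->
    \rank (Kmod Kf s + Bmod Kf t)%MS = (\rank (Bmod Kf t) + #|Sst s t|)%N.
  by move=> s0 st; apply: count_rank hB hd s t s0 st.
pose dWl := [seq dW p.1 p.2 | p <- enum [set: W * W]].
pose dTl := [seq dT p.1 p.2 | p <- enum [set: T * T]].
have dWin x y : dW x y \in dWl by apply/mapP; exists (x, y); rewrite ?mem_enum ?inE.
have dTin p q : dT p q \in dTl by apply/mapP; exists (p, q); rewrite ?mem_enum ?inE.
have loc c : 0 <= c -> exists2 t, c < t &
    forall u, c <= u -> u <= t -> forall j, (u \in bar j) = (c \in bar j).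
  move=> c0; have [t ct gap] := gapR (dWl ++ dTl) c.
  exists t => // u cu ut.
  have BY1 : (Bmod Kf u <= Bmod Kf c)%MS.
    apply: B_gap => p q _ _ h; apply: gap; first by rewrite mem_cat dTin orbT.
    exact: le_trans h ut.
  have BY2 : (Bmod Kf c <= Bmod Kf u)%MS := B_mono _ _ cu.
  have BZ1 : (Bspace dW [set: W] u <= Bspace dW [set: W] c)%MS.
    apply: B_gap => p q _ _ h; apply: gap; first by rewrite mem_cat dWin.
    exact: le_trans h ut.
  have BZ2 : (Bspace dW [set: W] c <= Bspace dW [set: W] u)%MS := B_mono _ _ cu.
  have K1 : (Kmod Kf u <= Kmod Kf c)%MS.
    rewrite subK; have := submx_refl (Kmod Kf u); rewrite subK => /andP[h1 h2].
    by rewrite h1 /=; exact: submx_trans h2 BZ1.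
  have K2 : (Kmod Kf c <= Kmod Kf u)%MS.
    rewrite subK; have := submx_refl (Kmod Kf c); rewrite subK => /andP[h1 h2].
    by rewrite h1 /=; exact: submx_trans h2 BZ2.
  have r1 : \rank (Kmod Kf c + Bmod Kf u)%MS = \rank (Kmod Kf c + Bmod Kf c)%MS.
    exact: (le_rank_eq (addsmxS (submx_refl _) BY1) (addsmxS (submx_refl _) BY2)).
  have r2 : \rank (Kmod Kf u + Bmod Kf u)%MS = \rank (Kmod Kf c + Bmod Kf c)%MS.
    exact: (le_rank_eq (addsmxS K1 BY1) (addsmxS K2 BY2)).
  have r3 : \rank (Bmod Kf u) = \rank (Bmod Kf c) := le_rank_eq BY1 BY2.
  have e1 := cnt c u c0 cu; have e2 := cnt c c c0 (lexx c).
  have e3 := cnt u u (le_trans c0 cu) (lexx u).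
  have c1 : #|Sst c u| = #|Sst c c|.
    by apply/eqP; rewrite -(eqn_add2l (\rank (Bmod Kf c))) -e2 -r1 -r3 e1.
  have c2 : #|Sst u u| = #|Sst c c|.
    by apply/eqP; rewrite -(eqn_add2l (\rank (Bmod Kf c))) -e2 -r2 -r3 e3.
  have s1 : Sst c u = Sst c c.
    apply/eqP; rewrite eqEcard c1 leqnn andbT; apply/subsetP => j.
    by rewrite !inE => /andP[-> _].
  have s2 : Sst c u = Sst u u.
    apply/eqP; rewrite eqEcard c1 c2 leqnn andbT; apply/subsetP => j.
    by rewrite !inE => /andP[_ ->].
  move=> j; apply/idP/idP => h.
    have : j \in Sst u u by rewrite inE h.
    by rewrite -s2 inE => /andP[].
  have : j \in Sst c c by rewrite inE h.
  by rewrite -s1 inE => /andP[].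
have van : exists u0, forall u, u0 <= u -> forall j, u \notin bar j.
  have [u0 h] := N_large.
  have [u1 [u10 u1u0]] : exists u1, 0 <= u1 /\ u0 <= u1.
    by case: (lerP 0 u0) => h0; [exists u0 | exists 0]; split => //; rlra.
  exists u1 => u uu j.
  have e := cnt u u (le_trans u10 uu) (lexx u).
  rewrite h in e; last exact: le_trans u1u0 uu.
  have S0 : Sst u u = set0.
    apply: cards0_eq; apply/eqP; rewrite -(eqn_add2l (\rank (Bmod Kf u))) addn0.
    by rewrite -e.
  apply/negP => uj; have : j \in Sst u u by rewrite inE uj.
  by rewrite S0 inE.
have shp j : exists c d, [/\ 0 <= c, c < d & bar j = `[c, d[].
  case: hd => hok _ _ _ _; apply: itv_shape (hok j) _ _.
    move=> c c0; have [t ct h] := loc c c0; exists t => // u cu ut; exact: h.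
  by have [u0 h] := van; exists u0 => u uu; exact: h.
pose lb j := if bar j is Interval (BSide _ c) _ then c else 0.
pose rb j := if bar j is Interval _ (BSide _ d) then d else 0.
have shp' j : [/\ 0 <= lb j, lb j < rb j & bar j = `[lb j, rb j[].
  by have [c [d [c0 cd e]]] := shp j; rewrite /lb /rb e.
have mem j u : (u \in bar j) = (lb j <= u < rb j).
  by case: (shp' j) => _ _ ->; rewrite in_itv.
have SstE s t j : (j \in Sst s t) = ((lb j <= s < rb j) && (lb j <= t < rb j)).
  by rewrite in_set !mem.
have bmE c d : bar_mult bar `[c, d[ = #|[set j | (lb j == c) && (rb j == d)]|.
  rewrite /bar_mult; apply: eq_card => j; rewrite !inE; case: (shp' j) => _ _ ->.
  apply/eqP/andP => [[e1 e2]|[/eqP e1 /eqP e2]]; first by rewrite e1 e2 !eqxx.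
  by rewrite e1 e2.
have m0neg a b : a < 0 -> mult0 (PH0 dW X) (PH0 dW [set: W]) 1%:M a b = 0%N.
  by move=> a0; rewrite /mult0 (_ : (0 <= a) = false) //; apply/negbTE; lra.
have m0a0 a b : a <= 0 -> mult0 (PH0 dW X) (PH0 dW [set: W]) 1%:M a b = 0%N.
  move=> a0; apply/eqP; rewrite -leqn0 leqNgt; apply/negP => /mult0_pos [h _ _]; have := lt_le_trans h a0; by rewrite ltxx.
have m0b0 a b : b <= 0 -> mult0 (PH0 dW X) (PH0 dW [set: W]) 1%:M a b = 0%N.
  move=> b0; apply/eqP; rewrite -leqn0 leqNgt; apply/negP => /mult0_pos [_ h _]; have := lt_le_trans h b0; by rewrite ltxx.
have count c d : 0 <= c -> c < d -> bar_mult bar `[c, d[ =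
    (mult0 (PH0 dW X) (PH0 dW [set: W]) 1%:M (d - delta) c +
     (if (c == 0%R) && (d == delta) then \rank kerY else 0))%N.
  move=> c0 cd; rewrite bmE.
  pose Ld := [seq rb j | j <- enum J] ++ (delta :: [seq delta + z | z <- dWl]).
  have [d' [cd' d'd gd]] := gapL Ld cd.
  have gdr j : (d <= rb j) || (rb j <= d').
    case: (lerP d (rb j)) => // h; apply/orP; right; apply: gd => //.
    by rewrite mem_cat; apply/orP; left; apply: map_f; rewrite mem_enum.
  have gdd : (d <= delta) || (delta <= d').
    case: (lerP d delta) => // h; apply/orP; right; apply: gd => //.
    by rewrite mem_cat inE eqxx orbT.
  have gdw x y : (d <= delta + dW x y) || (delta + dW x y <= d').
    case: (lerP d (delta + dW x y)) => // h; apply/orP; right; apply: gd => //.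
    by rewrite mem_cat inE; apply/orP; right; apply/orP; right; apply: map_f.
  case: (eqVneq c 0) => [c00|cn0].
    rewrite c00 in c0 cd cd' *.
    have E : [set j | (lb j == 0) && (rb j == d)] = Sst 0 d' :\: Sst 0 d.
      apply/setP => j; rewrite ?in_setD ?in_setU ?in_setI ?SstE ?in_set; have [l0 lr _] := shp' j; have := gdr j.
      by move=> gg; apply/idP/idP => h; rlra.
    have sub : Sst 0 d \subset Sst 0 d'.
      by apply/subsetP => j; rewrite ?in_setD ?in_setU ?in_setI ?SstE ?in_set; have [l0 lr _] := shp' j; move=> h; rlra.
    rewrite E cardsD (setIidPr sub).
    have e1 := cnt 0 d' (lexx 0) cd'; have e2 := cnt 0 d (lexx 0) (ltW cd).
    case: (ltrP d delta) => [dl | dg].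
      have d'l : d' < delta by rlra.
      rewrite m0neg; last by rlra.
      rewrite (_ : (d == delta) = false) /=; last by apply/negbTE; rlra.
      by rewrite (S_small d'l e1) (S_small dl e2) subnn.
    case: (eqVneq d delta) => [dd | dn].
      have d'l : d' < delta by rlra.
      rewrite m0a0; last by rlra.
      rewrite dd /=; rewrite dd in e2.
      by rewrite (S_small d'l e1) (S_delta e2) Bb0r subn0.
    have dd' : delta <= d' by rlra.
    have n1 := S_big dd' e1; have n2 := S_big dg e2.
    rewrite Bb0r F0 addn0 in n1; rewrite Bb0r F0 addn0 in n2.
    rewrite m0b0; last by rlra.
    by rewrite n1 n2.
  have cp : 0 < c by rewrite lt0r cn0.
  pose Lc := [seq lb j | j <- enum J] ++ dWl.
  have [c' [c'0 c'c gc]] := gapL Lc cp.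
  have gcl j : (c <= lb j) || (lb j <= c').
    case: (lerP c (lb j)) => // h; apply/orP; right; apply: gc => //.
    by rewrite mem_cat; apply/orP; left; apply: map_f; rewrite mem_enum.
  have gcw x y : (c <= dW x y) || (dW x y <= c').
    case: (lerP c (dW x y)) => // h; apply/orP; right; apply: gc => //.
    by rewrite mem_cat dWin orbT.
  have E : [set j | (lb j == c) && (rb j == d)] = Sst c d' :\: (Sst c' d' :|: Sst c d).
    apply/setP => j; rewrite ?in_setD ?in_setU ?in_setI ?SstE ?in_set; have [l0 lr _] := shp' j.
    have := gdr j; have := gcl j.
    by move=> g1 g2; apply/idP/idP => h; rlra.
  have I : Sst c' d' :&: Sst c d = Sst c' d.
    apply/setP => j; rewrite ?in_setD ?in_setU ?in_setI ?SstE ?in_set; have [l0 lr _] := shp' j.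
    by apply/idP/idP => h; rlra.
  have sub : Sst c' d' :|: Sst c d \subset Sst c d'.
    by apply/subsetP => j; rewrite ?in_setD ?in_setU ?in_setI ?SstE ?in_set; have [l0 lr _] := shp' j; move=> h; rlra.
  rewrite E cardsD (setIidPr sub).
  have U := cardsUI (Sst c' d') (Sst c d); rewrite I in U.
  have le := subset_leq_card sub.
  have e1 := cnt c d' c0 cd'.
  have e2 := cnt c' d' c'0 (ltW (lt_le_trans c'c cd')).
  have e3 := cnt c d c0 (ltW cd).
  have e4 := cnt c' d c'0 (ltW (lt_trans c'c cd)).
  rewrite ?(negPf cn0) /= ?addn0.
  case: (ltrP d delta) => [dl | dg].
    have d'l : d' < delta by rlra.
    rewrite m0neg; last by rlra.
    rewrite (S_small d'l e1) (S_small d'l e2) (S_small dl e3) (S_small dl e4) in U *.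
    exact: ar1 U.
  case: (eqVneq d delta) => [dd | dn].
    have d'l : d' < delta by rlra.
    rewrite m0a0; last by rlra.
    move: e3 e4 U; rewrite dd => e3 e4 U.
    rewrite (S_small d'l e1) (S_small d'l e2) (S_delta e3) (S_delta e4) in U *.
    exact: ar2 U.
  have dd' : delta <= d' by rlra.
  have f1 := S_big dd' e1; have f2 := S_big dd' e2.
  have f3 := S_big dg e3; have f4 := S_big dg e4.
  have M := @mult0E (d - delta) c (d' - delta) c'.
  have a'0 : 0 <= d' - delta by rlra.
  have a'a : d' - delta < d - delta by rlra.
  have g1 : forall x y, x \in X -> y \in X -> dW x y < d - delta -> dW x y <= d' - delta.
    by move=> x y _ _ h; have := gdw x y; rlra.
  have g2 : forall x y, dW x y < c -> dW x y <= c'.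
    by move=> x y h; have := gcw x y; rlra.
  have {M} M := M a'0 a'a c'0 c'c g1 g2.
  exact: ar3 f1 f2 f3 f4 U le M.
rewrite /injection_property.
have sig_ok : forall p : RepD (mult0 (PH0 dW X) (PH0 dW [set: W]) 1%:M),
    (0 < (sval p).2 <= bar_mult bar `[(sval p).1.2, ((sval p).1.1 + delta)%R[)%N.
  move=> [[[a b] n] /= /andP[n0 nm]].
  have [ha hb ba] := mult0_pos (leq_trans n0 nm).
  rewrite n0 /= count; last by apply: le_lt_trans ba _; rewrite ltrDl.
    by rewrite addrK; apply: leq_trans nm (leq_addr _ _).
  by rlra.
exists (fun p => exist _ (`[(sval p).1.2, (sval p).1.1 + delta[, (sval p).2) (sig_ok p)).
split.
- move=> [[[a1 b1] n1] h1] [[[a2 b2] n2] h2] /(congr1 sval) /= [e1 e2 e3].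
  apply: val_inj => /=; rewrite e1 e3; congr (_, _, _).
  exact: addIr e2.
- by move=> p.
move=> [[I l] hq] /= H.
have : (0 < bar_mult bar I)%N by case/andP: (hq) => h1 h2; exact: leq_trans h1 h2.
rewrite /bar_mult card_gt0 => /set0Pn [j]; rewrite inE => /eqP ej.
have [l0 lr e] := shp' j; rewrite e in ej.
case: (boolP ((lb j == 0) && (rb j == delta))) => [/andP[/eqP e1 /eqP e2] | hne].
  by rewrite -ej e1 e2.
exfalso; have hc := count (lb j) (rb j) l0 lr.
rewrite (negPf hne) addn0 in hc.
have pr : (0 < l <= mult0 (PH0 dW X) (PH0 dW [set: W]) 1%:M (rb j - delta) (lb j))%N.
  by rewrite -hc ej.
apply: (H (exist _ ((rb j - delta, lb j), l) pr)).
by apply: val_inj => /=; rewrite subrK ej.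
Qed.

End Core.



Unset Implicit Arguments.

Theorem proposition6p7 (R : realType)
  (Z Z' : finType) (dZ : Z -> Z -> R) (dZ' : Z' -> Z' -> R)
  (X : {set Z}) (X' : {set Z'})
  (hZ : is_metric dZ) (hZ' : is_metric dZ')
  (eps : R) (heps : is_dGH_pair dZ X dZ' X' eps)
  (M : Type) (dM : M -> M -> R) (hM : is_metric dM)
  (gZ : Z -> M) (gZ' : Z' -> M)
  (hgZ : isometric_embedding dZ dM gZ) (hgZ' : isometric_embedding dZ' dM gZ')
  (hHX : hausdorff_le dM gZ X gZ' X' eps)
  (hHZ : hausdorff_le dM gZ [set: Z] gZ' [set: Z'] eps)
  (aZ : Z -> Z') (aZ' : Z' -> Z)
  (haX : forall x, x \in X -> aZ x \in X')
  (haX' : forall x', x' \in X' -> aZ' x' \in X)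
  (haZ : forall z, dM (gZ z) (gZ' (aZ z)) <= eps)
  (haZ' : forall z', dM (gZ' z') (gZ (aZ' z')) <= eps)
  (delta : R) (hdelta : 0 < delta) :
  let Y := Yset X X' aZ aZ' in
  let V := PH0 dZ X in
  let U := PH0 dZ [set: Z] in
  let V' := PH0 dZ' X' in
  let U' := PH0 dZ' [set: Z'] in
  (* f, f' induced by the inclusions X <= Z, X' <= Z' (identity on chains);
     f^delta = f o h, f^delta' = f' o h', h, h' induced by the projections *)
  let kerfd := kermod (PH0 (dYdelta dZ delta) Y) U (chainmx (@fst Z Z') *m 1%:M) in
  let kerfd' := kermod (PH0 (dYdelta' dZ' delta) Y) U' (chainmx (@snd Z Z') *m 1%:M) in
  (forall (J : finType) (bar : J -> interval R) g,
     is_interval_decomposition kerfd bar g ->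
     injection_property (mult0 V U 1%:M) bar delta) /\
  (forall (J : finType) (bar : J -> interval R) g,
     is_interval_decomposition kerfd' bar g ->
     injection_property (mult0 V' U' 1%:M) bar delta).
Proof.
move=> Y V U V' U' kerfd kerfd'; split.
- move=> J bar g hd.
  apply: (core_main (pi := fst) (dW := dZ) hZ (X := X) (Y := Y) _ _ hdelta (dT := dYdelta dZ delta) _ hd).
  + by move=> y; rewrite inE => /and3P[].
  + move=> x xX; exists (x, aZ x) => //.
    by rewrite inE /= xX haX // eqxx.
  + by [].
- move=> J bar g hd.
  apply: (core_main (pi := snd) (dW := dZ') hZ' (X := X') (Y := Y) _ _ hdelta (dT := dYdelta' dZ' delta) _ hd).
  + by move=> y; rewrite inE => /and3P[].
  + move=> x xX; exists (aZ' x, x) => //.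
    by rewrite inE /= xX haX' // eqxx orbT.
  + by [].
Qed.
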